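(* Let $(T,\to)$ be a countable tournament such that $\mathrm{Aut}(T,\to)$ is transitive on $T$ and transitive on the set of arcs $\{(x,y): x\to y\}$. Suppose that for each vertex $x$, the 3-cycle $C_3$ embeds in the subtournament induced on $x^+=\{y: x\to y\}$. Then $C_3$ embeds in the subtournament induced on $x^-=\{y:y\to x\}$ for each vertex $x$.
   Context: A tournament is a digraph in which for any distinct $x,y$ exactly one of $x\to y$, $y\to x$ holds. $C_3$ denotes the tournament on $\{a,b,c\}$ with $a\to b\to c\to a$. *)

(* Defs.v *)
From mathcomp Require Import all_boot.
Set Implicit Arguments. Unset Strict Implicit. Unset Printing Implicit Defensive.

Definition is_tournament (T : Type) (arc : T -> T -> Prop) : Prop :=
  (forall x, ~ arc x x) /\
  (forall x y, x <> y -> (arc x y \/ arc y x) /\ ~ (arc x y /\ arc y x)).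

Definition countable_type (T : Type) : Prop :=
  exists g : T -> nat, injective g.

Definition is_automorphism (T : Type) (arc : T -> T -> Prop) (f : T -> T) : Prop :=
  bijective f /\ (forall x y, arc x y <-> arc (f x) (f y)).

Definition vertex_transitive (T : Type) (arc : T -> T -> Prop) : Prop :=
  forall x y : T, exists f, is_automorphism arc f /\ f x = y.

Definition arc_transitive (T : Type) (arc : T -> T -> Prop) : Prop :=
  forall x y x' y' : T, arc x y -> arc x' y' ->
    exists f, is_automorphism arc f /\ f x = x' /\ f y = y'.

Definition C3_arc (i j : 'I_3) : Prop := (nat_of_ord j = (i.+1 %% 3))%N.

Definition C3_embeds_in (T : Type) (arc : T -> T -> Prop) (S : T -> Prop) : Prop :=
  exists f : 'I_3 -> T, injective f /\ (forall i, S (f i)) /\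
    (forall i j, arc (f i) (f j) <-> C3_arc i j).

Definition out_nbhd (T : Type) (arc : T -> T -> Prop) (x : T) : T -> Prop :=
  fun y => arc x y.
Definition in_nbhd (T : Type) (arc : T -> T -> Prop) (x : T) : T -> Prop :=
  fun y => arc y x.

(* Main.v *)
Require Import Defs.
From mathcomp Require Import all_boot.
Set Implicit Arguments.

Section Aux.
Variables (T : Type) (arc : T -> T -> Prop).
Hypothesis Ht : is_tournament arc.

Lemma t_anti x y : arc x y -> ~ arc y x.
Proof.
move=> Hxy Hyx; case: Ht => Hirr Htot.
case: (Htot x y) => [E|_ H]; last by apply: H.
by subst; apply: (Hirr y).
Qed.

Lemma t_dich x y : arc x y -> forall z, arc z x -> arc z y \/ arc y z.
Proof.
move=> Hxy z Hzx.
have nz : z <> y by move=> E; subst; exact: (t_anti Hxy Hzx).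
have [Hirr Htot] := Ht.
by case: (Htot z y nz).
Qed.

Lemma mkC3 (S : T -> Prop) p q r :
  arc p q -> arc q r -> arc r p -> S p -> S q -> S r -> C3_embeds_in arc S.
Proof.
move=> Hpq Hqr Hrp Sp Sq Sr.
have [Hirr _] := Ht.
have npq : p <> q by move=> E; subst; exact: (Hirr q).
have nqr : q <> r by move=> E; subst; exact: (Hirr r).
have nrp : r <> p by move=> E; subst; exact: (Hirr p).
pose f (i : 'I_3) := if nat_of_ord i == 0 then p else if nat_of_ord i == 1 then q else r.
exists f; split; [|split].
- case=> [[|[|[|i]]] Hi] [[|[|[|j]]] Hj] //= E; apply/val_inj => //=;
  rewrite /f /= in E; try (by []); first [ by case: npq | by case: nqr | by case: nrp
     | by case: npq; symmetry | by case: nqr; symmetry | by case: nrp; symmetry ].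
- case=> [[|[|[|i]]] Hi] //; rewrite /f /=.
- case=> [[|[|[|i]]] Hi] // [[|[|[|j]]] Hj] //; rewrite /C3_arc /f /=; split=> // H;
  first [ by case: (Hirr _ H) | by case: (t_anti Hpq H) | by case: (t_anti Hqr H)
        | by case: (t_anti Hrp H) ].
Qed.
End Aux.

Theorem lemma3p4 (T : Type) (arc : T -> T -> Prop) :
  is_tournament arc ->
  countable_type T ->
  vertex_transitive arc ->
  arc_transitive arc ->
  (forall x : T, C3_embeds_in arc (out_nbhd arc x)) ->
  forall x : T, C3_embeds_in arc (in_nbhd arc x).
Proof.
move=> Ht _ Hvt Hat Hout x0.
have [v Hv] : exists v, C3_embeds_in arc (in_nbhd arc v).
  have [g [gi [gS gA]]] := Hout x0.
  pose a := g (@Ordinal 3 0 isT); pose b := g (@Ordinal 3 1 isT);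
  pose c := g (@Ordinal 3 2 isT).
  have Hab : arc a b by apply/gA.
  have Hbc : arc b c by apply/gA.
  have Hca : arc c a by apply/gA.
  have Hxa : arc x0 a by exact: gS.
  have Hxb : arc x0 b by exact: gS.
  have Hxc : arc x0 c by exact: gS.
  have [f [[Hfb Hfa] [fa fb]]] := Hat a b x0 a Hab Hxa.
  pose w := f c.
  have Haw : arc a w by rewrite -fb; apply: (proj1 (Hfa _ _)).
  have Hwx : arc w x0 by rewrite -fa; apply: (proj1 (Hfa _ _)).
  case: (@t_dich T arc Ht _ _ Hxb w Hwx) => Hwb.
    by exists b; apply: (@mkC3 T arc Ht _ w x0 a).
  case: (@t_dich T arc Ht _ _ Hxc w Hwx) => Hwc.
    by exists c; apply: (@mkC3 T arc Ht _ w x0 b).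
  by exists w; apply: (@mkC3 T arc Ht _ a b c).
have [f [[Hfb Hfa] fv]] := Hvt v x0.
case: Hv => g [gi [gS gA]].
exists (f \o g); split; [|split].
- apply: inj_comp => //; exact: bij_inj.
- by move=> i; rewrite /in_nbhd /= -fv; apply: (proj1 (Hfa _ _)); exact: gS.
- by move=> i j /=; split=> H; [apply/gA; apply/(Hfa (g i) (g j)) | apply/(Hfa (g i) (g j)); apply/gA].
Qed.
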